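(* For every tree $T$, the skew token sliding graph $\mathcal{Z}^{\mathrm{TS}}_-(T)$ contains no edges.
   Context: Skew forcing: vertices are colored blue or white; if any vertex $u$ (blue or white) has exactly one white neighbor $v$, then $u$ may force $v$ to become blue. A skew forcing set is a (possibly empty) set of initially blue vertices from which repeated application of this rule turns every vertex blue; $\mathrm{Z}_-(G)$ is the minimum size of a skew forcing set. $\mathcal{Z}^{\mathrm{TS}}_-(G)$ has as vertices the minimum skew forcing sets of $G$, with $S_1S_2$ an edge iff $S_1\setminus S_2=\{v_1\}$, $S_2\setminus S_1=\{v_2\}$ and $v_1v_2\in E(G)$. *)

(* Defs.v *)
From mathcomp Require Import all_boot.
Set Implicit Arguments. Unset Strict Implicit. Unset Printing Implicit Defensive.

Definition simple_graph (T : finType) (e : rel T) : Prop :=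
  symmetric e /\ irreflexive e.

Definition edge_set (T : finType) (e : rel T) : {set {set T}} :=
  [set [set x; y] | x in T, y in T & e x y].

Definition is_tree (T : finType) (e : rel T) : Prop :=
  [/\ simple_graph e, 0 < #|T|,
      (forall x y : T, connect e x y) &
      #|edge_set e| = #|T| - 1].

(* Skew forcing rule: u (any color) with exactly one white neighbour v
   (v the only neighbour of u outside the blue set B) forces v. *)
Definition skew_force (T : finType) (e : rel T) (B : {set T}) (u v : T) : bool :=
  [&& e u v, v \notin B & [forall w, (e u w && (w != v)) ==> (w \in B)]].

Inductive skew_reach (T : finType) (e : rel T) : {set T} -> Prop :=
| skew_reach_all : skew_reach e [set: T]
| skew_reach_step (B : {set T}) (u v : T) :
    skew_force e B u v -> skew_reach e (v |: B) -> skew_reach e B.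

Definition skew_forcing_set (T : finType) (e : rel T) (S : {set T}) : Prop :=
  skew_reach e S.

Definition min_skew_forcing_set (T : finType) (e : rel T) (S : {set T}) : Prop :=
  skew_forcing_set e S /\
  forall S' : {set T}, skew_forcing_set e S' -> #|S| <= #|S'|.

Definition skew_TS_adj (T : finType) (e : rel T) (S1 S2 : {set T}) : Prop :=
  min_skew_forcing_set e S1 /\ min_skew_forcing_set e S2 /\
  exists v1 v2 : T,
    [/\ S1 :\: S2 = [set v1], S2 :\: S1 = [set v2] & e v1 v2].

(* Main.v *)
Require Import Defs.
From mathcomp Require Import all_boot.
From mathcomp Require Import zify.

Section Aux.
Variables (T : finType) (e : rel T).

Lemma reach_mono (B : {set T}) : skew_reach e B ->
  forall B' : {set T}, B \subset B' -> skew_reach e B'.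
Proof.
elim=> [|{}B u v hf _ IH] B' sub.
  have -> : B' = setT by apply/eqP; rewrite eqEsubset subsetT.
  exact: skew_reach_all.
case vB: (v \in B').
  apply: IH; apply/subsetP => z; rewrite !inE => /orP[/eqP->//|]; exact: (subsetP sub).
apply: (@skew_reach_step _ _ B' u v); last first.
  by apply: IH; apply: setUS.
move: hf => /and3P[euv _ /forallP hw].
apply/and3P; split => //; first by rewrite vB.
apply/forallP => w; apply/implyP => hw'; apply: (subsetP sub).
exact: (implyP (hw w) hw').
Qed.

Lemma closure_ex (n : nat) : forall B : {set T}, #|~: B| <= n ->
  exists C : {set T}, [/\ B \subset C, (skew_reach e C -> skew_reach e B)
     & forall u v, ~~ skew_force e C u v].
Proof.
elim: n => [|n IH] B hB.
  have -> : B = setT.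
    by apply/setP => x; move: hB; rewrite leqn0 cards_eq0 => /eqP/setP/(_ x); rewrite !inE => /negbFE.
  exists setT; split => // u v; apply/negP => /and3P[_ ]; by rewrite inE.
case: (boolP [exists u, exists v, skew_force e B u v]).
  move=> /existsP[u /existsP[v hf]].
  have vB : v \notin B by case/and3P: hf.
  have : #|~: (v |: B)| <= n.
    have : #|~: (v |: B)| < #|~: B|.
      apply: proper_card; apply/properP; split.
        by rewrite setCS; apply: subsetUr.
      by exists v; rewrite !inE ?eqxx //.
    move=> h; lia.
  case/IH => C [s1 s2 s3]; exists C; split => //.
    by apply: subset_trans s1; apply: subsetUr.
  by move=> /s2 hr; apply: skew_reach_step hf hr.
move=> hn; exists B; split => // u v; apply/negP => hf.
by move/negP: hn; apply; apply/existsP; exists u; apply/existsP; exists v.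
Qed.

Definition EX (X : {set T}) := [set s in edge_set e | s \subset X].

Lemma card_add2 (A B : {set {set T}}) s1 s2 : A \subset B ->
  s1 \in B -> s2 \in B -> s1 \notin A -> s2 \notin A -> s1 != s2 ->
  #|A| + 2 <= #|B|.
Proof.
move=> sAB h1 h2 n1 n2 d.
have : #|s1 |: (s2 |: A)| <= #|B|.
  apply: subset_leq_card; apply/subsetP => z; rewrite !inE.
  by case/orP=> [/eqP->//|/orP[/eqP->//|/(subsetP sAB)]].
rewrite cardsU1 cardsU1 !inE negb_or d n1 n2 /=; lia.
Qed.

Lemma card_add1 (A B : {set {set T}}) s1 : A \subset B ->
  s1 \in B -> s1 \notin A -> #|A| + 1 <= #|B|.
Proof.
move=> sAB h1 n1.
have : #|s1 |: A| <= #|B|.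
  apply: subset_leq_card; apply/subsetP => z; rewrite !inE.
  by case/orP=> [/eqP->//|/(subsetP sAB)].
rewrite cardsU1 n1 /=; lia.
Qed.

Lemma edge_in x y : e x y -> [set x; y] \in edge_set e.
Proof. move=> h; apply/imset2P; exists x y => //; by rewrite inE. Qed.

Lemma no_core : is_tree e -> forall Q : {set T},
  (forall q, q \in Q -> exists a b, [/\ a != b, a \in Q, b \in Q, e q a & e q b]) ->
  forall q0, q0 \notin Q.
Proof.
case=> [[sym irr] n0 conn ecard] Q hQ q0; apply/negP => q0Q.
pose inv (X : {set T}) := #|X| <= #|EX X| + 1 /\ (Q \subset X -> #|X| <= #|EX X|).
have grow : forall k, k < #|T| -> exists X : {set T}, #|X| = k.+1 /\ inv X.
  elim=> [_|k IH hk].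
    exists [set q0]; split; first by rewrite cards1.
    rewrite /inv; split; first by rewrite cards1 addn1.
    move=> sub; exfalso.
    have [a [b [_ aQ _ ea _]]] := hQ q0 q0Q.
    have := subsetP sub a aQ; rewrite inE => /eqP ha.
    by move: ea; rewrite ha irr.
  have [X [cX [i1 i2]]] := IH (ltnW hk).
  have : [exists x, exists y, [&& x \in X, y \notin X & e x y]].
    case: (boolP [exists x, exists y, [&& x \in X, y \notin X & e x y]]) => // hn; exfalso.
    have cl : closed e (mem X).
      move=> x y exy.
      change ((x \in X) = (y \in X)); case xX: (x \in X); case yX: (y \in X) => //.
        by exfalso; move/negP: hn; apply; apply/existsP; exists x; apply/existsP; exists y; rewrite xX yX exy.
      by exfalso; move/negP: hn; apply; apply/existsP; exists y; apply/existsP; exists x; rewrite xX yX sym exy.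
    have : X != set0 by rewrite -card_gt0 cX.
    case/set0Pn => x0 x0X.
    have : X != setT by apply/negP => /eqP hX; move: cX; rewrite hX cardsT; lia.
    move=> /negP nT.
    apply: nT; apply/eqP/setP => z; rewrite inE.
    by rewrite -(closed_connect cl (conn x0 z)).
  case/existsP => x /existsP[y /and3P[xX yX exy]].
  exists (y |: X); split; first by rewrite cardsU1 yX cX.
  have sub : EX X \subset EX (y |: X).
    apply/subsetP => s; rewrite !inE => /andP[-> /subset_trans]; apply.
    exact: subsetUr.
  have inE' : forall a, a \in X -> e y a -> [set y; a] \in EX (y |: X) /\ [set y; a] \notin EX X.
    move=> a aX eya; split.
      rewrite inE edge_in //=; apply/subsetP => z; rewrite !inE.
      by case/orP=> /eqP->; rewrite ?eqxx ?aX ?orbT.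
    rewrite inE negb_and; apply/orP; right; apply/negP => /subsetP /(_ y).
    by rewrite !inE eqxx (negbTE yX) => /(_ isT).
  have [h1 h2] := inE' x xX ltac:(by rewrite sym).
  have c1 := card_add1 _ _ _ sub h1 h2.
  split; first by rewrite cardsU1 yX; lia.
  move=> QX; case: (boolP (Q \subset X)) => [/i2|nQ]; first by rewrite cardsU1 yX; lia.
  have yQ : y \in Q.
    case/subsetPn: nQ => q qQ qX.
    by have := subsetP QX q qQ; rewrite !inE (negbTE qX) orbF => /eqP <-.
  have [a [b [ab aQ bQ eya eyb]]] := hQ y yQ.
  have inX : forall c, c \in Q -> e y c -> c \in X.
    move=> c cQ eyc; have := subsetP QX c cQ; rewrite !inE => /orP[/eqP hc|//].
    by move: eyc; rewrite hc irr.
  have [ha1 ha2] := inE' a (inX a aQ eya) eya.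
  have [hb1 hb2] := inE' b (inX b bQ eyb) eyb.
  have dab : [set y; a] != [set y; b].
    apply/negP => /eqP /setP /(_ a); rewrite !inE eqxx orbT /= => /esym /orP[/eqP ha|/eqP ha].
      by move: eya; rewrite -ha irr.
    by move: ab; rewrite ha eqxx.
  have := card_add2 _ _ _ _ sub ha1 hb1 ha2 hb2 dab.
  move=> h; rewrite cardsU1 yX /=; apply: leq_trans h; by rewrite add1n addn2 ltnS -addn1.
have [X [cX [_ i2]]] := grow #|T|.-1 ltac:(clear -n0; lia).
have hX : X = setT by apply/eqP; rewrite eqEcard subsetT cardsT cX; clear -n0 cX; lia.
have := i2 ltac:(by rewrite hX subsetT).
have : #|EX X| <= #|edge_set e|.
  by apply: subset_leq_card; apply/subsetP => s; rewrite inE => /andP[].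
lia.
Qed.

End Aux.
Arguments reach_mono [T e B].

Theorem theorem5p29 (T : finType) (e : rel T) :
  is_tree e -> forall S1 S2 : {set T}, ~ skew_TS_adj e S1 S2.
Proof.
move=> tr S1 S2 [[r1 m1] [[r2 _] [v1 [v2 [d1 d2 ev]]]]].
have sym : symmetric e by case: tr => [[]].
have v1S1 : v1 \in S1 by move/setP/(_ v1): (d1); rewrite !inE eqxx => /andP[].
have v1S2 : v1 \notin S2 by move/setP/(_ v1): (d1); rewrite !inE eqxx => /andP[].
pose S := S1 :&: S2.
have sub1 : S1 \subset v1 |: S.
  apply/subsetP => x xS1; rewrite !inE xS1 /=.
  case: (boolP (x \in S2)) => [_|nx]; first by rewrite orbT.
  move/setP/(_ x): (d1); rewrite !inE nx xS1 => <-; by [].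

have sub2 : S2 \subset v2 |: S.
  apply/subsetP => x xS2; rewrite !inE xS2 /=.
  case: (boolP (x \in S1)) => [_|nx]; first by rewrite orbT.
  move/setP/(_ x): (d2); rewrite !inE nx xS2 => <-; by [].
have [C [sC hC stuck]] := @closure_ex T e #|~: S| S (leqnn _).
have rS : skew_reach e S.
  apply: hC.
  case: (boolP (v1 \in C)) => h1.
    apply: (reach_mono r1); apply: subset_trans sub1 _.
    by apply/subsetP => x; rewrite in_setU1 => /orP[/eqP->//|/(subsetP sC)].
  case: (boolP (v2 \in C)) => h2.
    apply: (reach_mono r2); apply: subset_trans sub2 _.
    by apply/subsetP => x; rewrite in_setU1 => /orP[/eqP->//|/(subsetP sC)].
  exfalso.
  pose Q := [set w in ~: C | [exists a, (a \notin C) && e w a]].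
  have := @no_core T e tr Q _ v1; rewrite inE !inE h1 /=.
  have -> : [exists a, (a \notin C) && e v1 a] by apply/existsP; exists v2; rewrite h2 ev.
  move=> H; have : ~~ true; last by []. apply: H => q; rewrite !inE => /andP[qC /existsP[a /andP[aC eqa]]].
  have aQ : a \in Q by rewrite !inE aC /=; apply/existsP; exists q; rewrite qC sym.
  have := stuck q a; rewrite /skew_force eqa aC /= negb_forall => /existsP[b].
  rewrite negb_imply => /andP[/andP[eqb ba] bC].
  exists a, b; split => //; first by rewrite eq_sym.
  by rewrite !inE bC /=; apply/existsP; exists q; rewrite qC sym.
have := m1 S rS.
have : #|S| < #|S1|.
  apply: proper_card; apply/properP; split; first by apply: subsetIl.
  by exists v1 => //; rewrite inE (negbTE v1S2) andbF.
lia.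
Qed.
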